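(* Let $G$ be a graph with minimum degree at least $2$ and maximum degree at most $4$, let $k$ be an integer, and write $r(G,k) = k - |V(G)|/3$. Let $C,H$ be a general crown in $G$ such that $G-C-H$ has minimum degree at least $2$, and let $(G',k')$ be obtained as follows: (i) if $C,H$ is a proper crown, $G' = G - (C\cup H)$ and $k' = k-|H|$; (ii) if $C,H$ is an almost crown and $H$ is not an independent set, $G' = G-(C\cup H)$ and $k' = k-|H|$; (iii) if $C,H$ is an almost crown and $H$ is an independent set, $G'$ is obtained from $G$ by merging the vertices of $C\cup H$ into a single vertex, and $k' = k-(|H|-1)$. Then in each case $r(G',k') \le r(G,k)$.
   Context: All graphs are finite, simple and undirected. A general crown in $G$ is a pair $C,H$ of disjoint nonempty subsets of $V(G)$ such that every vertex of $C$ has degree $0$ in $G-H$ (i.e., all neighbors of vertices of $C$ lie in $H$). A proper crown is a general crown $C,H$ for which there is a matching between $C$ and $H$ of size $|H|$. An almost crown is a general crown $C,H$ with $|H| = |C|+1$ and $|N(S)|\ge |S|+1$ for every nonempty $S\subseteq C$, where $N(S) = (\bigcup_{v\in S}N(v))\setminus S$. For a set $S$ of vertices, $G-S$ is the graph obtained by deleting $S$ and all incident edges. Merging a set $S$ of vertices means deleting $S$ and adding a new vertex $v^*$ adjacent exactly to those remaining vertices that had a neighbor in $S$. *)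

(* Defs.v *)
From HB Require Import structures.
From mathcomp Require Import all_boot all_order all_algebra.
Set Implicit Arguments. Unset Strict Implicit. Unset Printing Implicit Defensive.
Import Order.TTheory GRing.Theory Num.Theory.

Record graph := Graph {
  vtx :> finType;
  adj : rel vtx;
  adj_sym : symmetric adj;
  adj_irr : irreflexive adj }.

Section Graphs.
Variable G : graph.

Definition nbhd (x : G) : {set G} := [set y | adj x y].
Definition deg (x : G) : nat := #|nbhd x|.
Definition min_deg_ge (d : nat) : Prop := forall x : G, d <= deg x.
Definition max_deg_le (d : nat) : Prop := forall x : G, deg x <= d.

Definition nbhd_set (S : {set G}) : {set G} :=
  (\bigcup_(v in S) nbhd v) :\: S.

Definition independent (S : {set G}) : Prop :=
  forall x y, x \in S -> y \in S -> ~~ adj x y.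

(* general crown: C, H disjoint nonempty, every vertex of C has degree 0 in G - H *)
Definition general_crown (C H : {set G}) : Prop :=
  [/\ [disjoint C & H], C != set0, H != set0 &
      forall c y, c \in C -> adj c y -> y \in H].

Definition matching_between (C H : {set G}) (M : {set G * G}) : Prop :=
  (forall p, p \in M -> [/\ p.1 \in C, p.2 \in H & adj p.1 p.2]) /\
  (forall p q, p \in M -> q \in M -> p != q ->
     [/\ p.1 != q.1, p.2 != q.2, p.1 != q.2 & p.2 != q.1]).

Definition proper_crown (C H : {set G}) : Prop :=
  general_crown C H /\
  exists M : {set G * G}, matching_between C H M /\ #|M| = #|H|.

Definition almost_crown (C H : {set G}) : Prop :=
  [/\ general_crown C H, #|H| = #|C|.+1 &
      forall S : {set G}, S \subset C -> S != set0 -> #|S|.+1 <= #|nbhd_set S| ].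

End Graphs.

Section Delete.
Variables (G : graph) (S : {set G}).
Definition del_vtx : finType := {x : G | x \notin S}.
Definition del_adj : rel del_vtx := fun x y => adj (val x) (val y).
Lemma del_adj_sym : symmetric del_adj.
Proof. by move=> x y; rewrite /del_adj adj_sym. Qed.
Lemma del_adj_irr : irreflexive del_adj.
Proof. by move=> x; rewrite /del_adj adj_irr. Qed.
Definition del_graph : graph := Graph del_adj_sym del_adj_irr.
End Delete.

(* merging S: delete S, add a new vertex (None) adjacent exactly to the
   remaining vertices having a neighbour in S *)
Section Merge.
Variables (G : graph) (S : {set G}).
Definition merge_vtx : finType := option (del_vtx S).
Definition merge_adj : rel merge_vtx := fun x y =>
  match x, y with
  | Some a, Some b => adj (val a) (val b)
  | Some a, None => [exists s in S, adj (val a) s]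
  | None, Some b => [exists s in S, adj (val b) s]
  | None, None => false
  end.
Lemma merge_adj_sym : symmetric merge_adj.
Proof. by case=> [a|] [b|] //=; rewrite adj_sym. Qed.
Lemma merge_adj_irr : irreflexive merge_adj.
Proof. by case=> [a|] //=; rewrite adj_irr. Qed.
Definition merge_graph : graph := Graph merge_adj_sym merge_adj_irr.
End Merge.

Definition rmeas (G : graph) (k : int) : rat :=
  (k%:~R - (#|G|)%:R / 3)%R.

(* Main.v *)
Require Import Defs.
From HB Require Import structures.
From mathcomp Require Import all_boot all_order all_algebra.
From mathcomp Require Import lra zify.
Import Order.TTheory GRing.Theory Num.Theory.

Lemma sum_adj (G : graph) (A : {set G}) (x : G) :
  \sum_(y in A) (adj x y : nat) = #|[set y in A | adj x y]|.
Proof.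
rewrite -sum1_card [RHS]big_mkcond [LHS]big_mkcond /=; apply: eq_bigr => y _.
by rewrite inE; case: (y \in A); case: (adj x y).
Qed.
Lemma count_CH (G : graph) (C H : {set G}) :
  min_deg_ge G 2 -> max_deg_le G 4 -> general_crown C H -> #|C| <= 2 * #|H|.
Proof.
move=> m2 M4 [_ _ _ hC].
have e1 : 2 * #|C| <= \sum_(c in C) \sum_(h in H) (adj c h : nat).
  rewrite mulnC -sum_nat_const; apply: leq_sum => c cC.
  rewrite sum_adj; apply: (leq_trans (m2 c)); rewrite /deg subset_leq_card //.
  by apply/subsetP => y; rewrite !inE => a; rewrite a (hC c y).
have e2 : \sum_(h in H) \sum_(c in C) (adj c h : nat) <= 2 * (2 * #|H|).
  rewrite mulnA mulnC -sum_nat_const; apply: leq_sum => h hH.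
  under eq_bigr => c _ do rewrite adj_sym.
  rewrite sum_adj; apply: leq_trans (M4 h); rewrite /deg subset_leq_card //.
  by apply/subsetP => y; rewrite !inE => /andP[].
rewrite exchange_big /= in e1.
rewrite -(leq_pmul2l (isT : 0 < 2)); exact: leq_trans e1 e2.
Qed.

Lemma card_del (G : graph) (S : {set G}) : #|del_graph S| = #|G| - #|S|.
Proof.
rewrite /= /del_vtx card_sig.
have -> : #|[pred x | x \notin S]| = #|~: S| by apply: eq_card => x; rewrite !inE.
by rewrite cardsCs setCK.
Qed.

Theorem lemma2 (G : graph) (k : int) (C H : {set G}) :
  min_deg_ge G 2 -> max_deg_le G 4 ->
  general_crown C H ->
  min_deg_ge (del_graph (C :|: H)) 2 ->
  [/\ proper_crown C H ->
        (rmeas (del_graph (C :|: H)) (k - (#|H|)%:Z) <= rmeas G k)%R,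
      almost_crown C H -> ~ independent H ->
        (rmeas (del_graph (C :|: H)) (k - (#|H|)%:Z) <= rmeas G k)%R &
      almost_crown C H -> independent H ->
        (rmeas (merge_graph (C :|: H)) (k - ((#|H|)%:Z - 1)) <= rmeas G k)%R].
Proof.
move=> m2 M4 gc _.
have hCH := @count_CH G C H m2 M4 gc.
have [dis _ _ _] := gc.
have eU : #|C :|: H| = #|C| + #|H|.
  by rewrite cardsU (disjoint_setI0 dis) cards0 subn0.
have le : #|C :|: H| <= #|G| by apply: max_card.
have key : forall c h s n : nat, (s <= n)%N -> s = (c + h)%N ->
   ((c%:R : rat) <= 2 * h%:R)%R ->
   (((k - h%:Z)%:~R : rat) - (n - s)%:R / 3 <= k%:~R - n%:R / 3)%R.
  move=> c h s n sn es ch; subst s.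
  rewrite (natrB _ sn) natrD intrB -pmulrn.
  lra.
split.
- move=> _; rewrite /rmeas card_del; apply: key le eU _.
  by rewrite -natrM ler_nat.
- move=> [_ e _] _; rewrite /rmeas card_del; apply: key le eU _.
  by rewrite -natrM ler_nat e; lia.
- move=> [_ e _] _; rewrite /rmeas /= card_option /= card_del.
  rewrite eU e in le *; move: le; move: #|C| #|G| => c n sn.
  have -> : ((c.+1)%:Z - 1 = c%:Z)%R by rewrite -addn1 PoszD addrK.
  rewrite -[(n - _).+1]addn1 natrD (natrB _ sn) !natrD intrB -!pmulrn /=.
  have c0 : (0 <= c%:R :> rat)%R by rewrite ler0n.
  have h1 : (c.+1%:R = c%:R + 1 :> rat)%R by rewrite -addn1 natrD.
  lra.
Qed.
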